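(* Let $r\ge1$, $\mathbf{M}=(M_0,\dots,M_{e-1})\in\mathbb{Z}_{\ge0}^e$ and $(\boldsymbol\lambda,\mathbf{s}),(\boldsymbol\mu,\mathbf{s}')\in\mathcal{A}_e^r$. Then $(\boldsymbol\lambda,\mathbf{s})\approx_e(\boldsymbol\mu,\mathbf{s}')$ if and only if $\mathrm{Str}((\boldsymbol\lambda,\mathbf{s});\mathbf{M})\approx_e\mathrm{Str}((\boldsymbol\mu,\mathbf{s}');\mathbf{M})$.
   Context: Fix an integer $e\ge 2$. A partition is a weakly decreasing sequence $\lambda=(\lambda_1,\lambda_2,\dots)$ of non-negative integers with finite sum $|\lambda|$; $\Lambda$ denotes the set of partitions and $\Lambda^{(m)}$ the set of $m$-multipartitions, i.e. $m$-tuples $\boldsymbol\lambda=(\lambda^{(1)},\dots,\lambda^{(m)})$ of partitions, with $|\boldsymbol\lambda|=\sum_k|\lambda^{(k)}|$. A $\beta$-set is a subset $B\subseteq\mathbb{Z}$ containing all sufficiently small integers and no sufficiently large ones. For $\lambda\in\Lambda$ and $s\in\mathbb{Z}$ set $B_s(\lambda)=\{\lambda_i-i+s : i\ge 1\}$; every $\beta$-set equals $B_s(\lambda)$ for a unique pair $(\lambda,s)$. Let $\mathcal{A}_e=\Lambda\times\mathbb{Z}$ (abacus configurations with $e$ runners) and $\mathcal{A}_e^m=\Lambda^{(m)}\times\mathbb{Z}^m$, where $(\boldsymbol\lambda,\mathbf{s})$ is identified with the $m$-tuple of $\beta$-sets $(B_{s_1}(\lambda^{(1)}),\dots,B_{s_m}(\lambda^{(m)}))$.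 Blocks: for $(\boldsymbol\lambda,\mathbf{s})\in\mathcal{A}_e^m$, its $e$-residue multiset is the multiset of the values $s_k+y-x \bmod e$ over all nodes $(x,y,k)$ with $x\ge1$, $1\le y\le\lambda^{(k)}_x$, $1\le k\le m$. Define $(\boldsymbol\lambda,\mathbf{s})\approx_e(\boldsymbol\mu,\mathbf{s}')$ iff $\mathbf{s}=\mathbf{s}'$, $|\boldsymbol\lambda|=|\boldsymbol\mu|$ and the $e$-residue multisets coincide. Its equivalence classes are called blocks. The map $\eta$: for $(\lambda,s)\in\mathcal{A}_e$ with $B=B_s(\lambda)$ and $0\le i<e$, the set $C_i=\{(b-i)/e : b\in B,\ b\equiv i \bmod e\}$ is a $\beta$-set, so $C_i=B_{t_i}(\rho_i)$ for a unique $(\rho_i,t_i)\in\Lambda\times\mathbb{Z}$; set $\eta(\lambda,s)=((\rho_0,\dots,\rho_{e-1}),(t_0,\dots,t_{e-1}))$; $\eta$ is a bijection $\mathcal{A}_e\to\Lambda^{(e)}\times\mathbb{Z}^e$. Stretching: for $\mathbf{M}\in\mathbb{Z}^e$ and $(\lambda,s)\in\mathcal{A}_e$ with $\eta(\lambda,s)=(\boldsymbol\rho,(t_0,\dots,t_{e-1}))$, $\mathrm{Str}((\lambda,s);\mathbf{M})$ is the unique element of $\mathcal{A}_e$ whose image under $\eta$ is $(\boldsymbol\rho,(t_0+M_0,\dots,t_{e-1}+M_{e-1}))$. For $(\boldsymbol\lambda,\mathbf{s})\in\mathcal{A}_e^r$, $\mathrm{Str}((\boldsymbol\lambda,\mathbf{s});\mathbf{M})$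 is obtained by applying this to each component $(\lambda^{(k)},s_k)$; for a subset $\mathcal{R}$, $\mathrm{Str}(\mathcal{R};\mathbf{M})$ is its image. *)

(* Defs.v *)
From Stdlib Require Import ClassicalEpsilon.
From mathcomp Require Import all_boot all_order all_algebra.
Set Implicit Arguments. Unset Strict Implicit. Unset Printing Implicit Defensive.
Import Order.TTheory GRing.Theory Num.Theory.
Local Open Scope ring_scope.

(* A partition is represented by the list of its nonzero parts, weakly
   decreasing: lambda_i = nth 0 l (i-1) for i >= 1, and 0 beyond. *)
Definition is_partition (l : seq nat) : bool :=
  sorted (fun a b => (b <= a)%N) l && all (fun a => (0 < a)%N) l.

Definition part (l : seq nat) (i : nat) : nat := nth 0%N l i.-1.

Definition beta_set (l : seq nat) (s : int) : int -> Prop :=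
  fun b => exists i : nat, (0 < i)%N /\ b = (part l i)%:Z - i%:Z + s.

Definition config := (seq nat * int)%type.

Definition runner_set (e : nat) (B : int -> Prop) (i : nat) : int -> Prop :=
  fun c => exists b, B b /\ (b %% e%:Z)%Z = i%:Z /\ c = ((b - i%:Z) %/ e%:Z)%Z.

Definition beta_decomp (C : int -> Prop) : config :=
  epsilon (inhabits ([::], 0))
    (fun p => is_partition p.1 /\ forall c, C c <-> beta_set p.1 p.2 c).

(* eta(lambda, s) = ((rho_0..rho_{e-1}), (t_0..t_{e-1})), as a function of i *)
Definition eta (e : nat) (x : config) (i : 'I_e) : config :=
  beta_decomp (runner_set e (beta_set x.1 x.2) i).

Definition Str (e : nat) (M : 'I_e -> nat) (x : config) : config :=
  epsilon (inhabits ([::], 0))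
    (fun y => is_partition y.1 /\
       forall i : 'I_e, @eta e y i = ((@eta e x i).1, (@eta e x i).2 + (M i)%:Z)).

Definition mconfig (r : nat) := (('I_r -> seq nat) * {ffun 'I_r -> int})%type.

Definition mStr (e : nat) (M : 'I_e -> nat) (r : nat) (X : mconfig r)
  : mconfig r :=
  (fun k => (Str M (X.1 k, X.2 k)).1, [ffun k => (Str M (X.1 k, X.2 k)).2]).

Definition msize r (X : mconfig r) : nat := (\sum_(k < r) sumn (X.1 k))%N.

(* multiplicity of residue j in the e-residue multiset of X:
   number of nodes (x,y,k), x>=1, 1<=y<=lambda^(k)_x, with
   s_k + y - x = j mod e *)
Definition res_count (e : nat) r (X : mconfig r) (j : 'I_e) : nat :=
  (\sum_(k < r) \sum_(x < size (X.1 k)) \sum_(y < nth 0%N (X.1 k) x)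
     (((X.2 k + y.+1%:Z - x.+1%:Z) %% e%:Z)%Z == (nat_of_ord j)%:Z))%N.

Definition block_eq (e : nat) r (X Y : mconfig r) : Prop :=
  X.2 = Y.2 /\ msize X = msize Y /\ forall j : 'I_e, res_count X j = res_count Y j.

(* Main.v *)
Require Import Defs.
From Stdlib Require Import ClassicalEpsilon Classical.
From mathcomp Require Import all_boot all_order all_algebra zify ring.
Set Implicit Arguments. Unset Strict Implicit. Unset Printing Implicit Defensive.
Import Order.TTheory GRing.Theory Num.Theory.
Section S1.
Local Open Scope ring_scope.
Variable e : nat.
Hypothesis he : (0 < e)%N.

Lemma ez : (e%:Z != 0). Proof. by rewrite eqz_nat -lt0n. Qed.
Lemma ezp : (0 < e%:Z). Proof. by rewrite ltz_nat. Qed.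

Definition F (j : nat) (m : int) : int := ((m - j%:Z) %/ e%:Z)%Z.

Lemma divz_step (u : int) :
  ((u+1) %/ e%:Z)%Z - (u %/ e%:Z)%Z = (((u + 1) %% e%:Z)%Z == 0) :> int.
Proof.
have hu := divz_eq u e%:Z.
have h0 := modz_ge0 u ez. have h1 := ltz_pmod u ezp.
set q := (u %/ e%:Z)%Z in hu *; set r := (u %% e%:Z)%Z in hu h0 h1.
have [hr|hr] := ltP (r + 1) e%:Z.
  have -> : u + 1 = q * e%:Z + (r + 1) by rewrite hu -addrA.
  rewrite divzMDl ?ez // divz_small; last by apply/andP; split; lia.
  rewrite modzMDl modz_small; last by apply/andP; split; lia.
  have -> : (r + 1 == 0) = false by apply/eqP; lia.
  by rewrite addr0 subrr.
have -> : u + 1 = (q + 1) * e%:Z by rewrite hu mulrDl mul1r; lia.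
by rewrite mulzK ?ez // modzMl eqxx; lia.
Qed.

Lemma modeq0 (x : int) (j : nat) : (j < e)%N ->
  (((x - j%:Z) %% e%:Z)%Z == 0) = ((x %% e%:Z)%Z == j%:Z).
Proof.
move=> hj.
have hjj : j%:Z = (j%:Z %% e%:Z)%Z by rewrite modz_small //; apply/andP; split; lia.
rewrite [in RHS]hjj -/(x == j%:Z %[mod e%:Z])%Z eqz_mod_dvd.
by apply/idP/idP => [/eqP/dvdz_mod0P|/dvdz_mod0P/eqP].
Qed.

Lemma F_step (j : nat) (x : int) : (j < e)%N ->
  F j (x + 1) - F j x = (((x + 1) %% e%:Z)%Z == j%:Z) :> int.
Proof.
move=> hj; rewrite /F -modeq0 //.
have -> : x + 1 - j%:Z = x - j%:Z + 1 by lia.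
by rewrite divz_step.
Qed.

Lemma cnt (a : int) (n j : nat) : (j < e)%N ->
  (\sum_(y < n) (((a + y.+1%:Z) %% e%:Z)%Z == j%:Z) : nat)%:Z
   = F j (a + n%:Z) - F j a.
Proof.
move=> hj; elim: n => [|n IH]; first by rewrite big_ord0 addr0 subrr.
rewrite big_ord_recr /= PoszD IH.
have -> : a + n.+1%:Z = (a + n%:Z) + 1 by lia.
rewrite -(F_step _ hj).
lia.
Qed.

End S1.
Section S2.
Local Open Scope ring_scope.

Lemma nth_le_sumn (l : seq nat) i : (nth 0%N l i <= sumn l)%N.
Proof.
elim: l i => [|a l IH] [|i] //=; first exact: leq_addr.
by apply: leq_trans (IH i) _; exact: leq_addl.
Qed.

Lemma part_sorted (l : seq nat) X : is_partition l -> (nth 0%N l X.+1 <= nth 0%N l X)%N.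
Proof.
case/andP=> hs _; elim: l X hs => [|a l IH] X //=.
case: l IH => [|b l] IH /=; first by case: X.
case/andP=> hab hp; case: X => [|X] //=.
exact: (IH X).
Qed.

Lemma part_pos (l : seq nat) X : is_partition l -> (X < size l)%N -> (0 < nth 0%N l X)%N.
Proof.
case/andP=> _ /allP ha hX; apply: ha; exact: mem_nth.
Qed.

Definition bval (l : seq nat) (s : int) (X : nat) : int :=
  (nth 0%N l X)%:Z - X%:Z - 1 + s.

Lemma betaE l s m : beta_set l s m <-> exists X, m = bval l s X.
Proof.
split.
  case=> [[|i] [hi ->]] //; exists i.
  by rewrite /bval /part /=; lia.
case=> X ->; exists X.+1; split => //.
by rewrite /bval /part /=; lia.
Qed.

Lemma bval_decr l s : is_partition l -> forall X, bval l s X.+1 < bval l s X.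
Proof. move=> hl X; have := part_sorted X hl; rewrite /bval; lia. Qed.

Lemma decr_lt (f : nat -> int) : (forall X, f X.+1 < f X) ->
  forall a b, (a < b)%N -> f b < f a.
Proof.
move=> hf a; elim=> [|b IH] //; rewrite ltnS leq_eqVlt => /orP [/eqP ->|/IH h].
  exact: hf.
exact: lt_trans (hf b) h.
Qed.

Lemma decr_inj (f : nat -> int) : (forall X, f X.+1 < f X) -> injective f.
Proof.
move=> hf a b hab; case: (ltngtP a b) => // h.
  by have := decr_lt hf h; rewrite hab ltxx.
by have := decr_lt hf h; rewrite hab ltxx.
Qed.

Lemma decr_eq (f g : nat -> int) : (forall X, f X.+1 < f X) ->
  (forall X, g X.+1 < g X) ->
  (forall m, (exists X, m = f X) <-> (exists X, m = g X)) ->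
  forall X, f X = g X.
Proof.
move=> hf hg hfg; elim/ltn_ind => X IH.
have [Y hY] : exists Y, f X = g Y by apply/hfg; exists X.
have [Z hZ] : exists Z, g X = f Z by apply/hfg; exists X.
case: (ltngtP Y X) => hYX.
- by have := decr_lt hf hYX; rewrite hY -IH // ltxx.
- case: (ltngtP Z X) => hZX.
  + have := decr_lt hg hZX. by rewrite hZ IH // ltxx.
  + have h1 := decr_lt hf hZX; have h2 := decr_lt hg hYX.
    rewrite -hY in h2; rewrite -hZ in h1.
    by have := lt_trans h1 h2; rewrite ltxx.
  + by rewrite hZ hZX.
- by rewrite hY hYX.
Qed.

Lemma beta_uniq l s l' s' : is_partition l -> is_partition l' ->
  (forall m, beta_set l s m <-> beta_set l' s' m) -> l = l' /\ s = s'.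
Proof.
move=> hl hl' h.
have E := decr_eq (bval_decr s hl) (bval_decr s' hl')
  (fun m => iff_trans (iff_sym (betaE l s m)) (iff_trans (h m) (betaE l' s' m))).
have hs : s = s'.
  have := E (size l + size l')%N; rewrite /bval !nth_default; first lia.
    exact: leq_addl.
  exact: leq_addr.
split => //; subst s'.
have En : forall X, nth 0%N l X = nth 0%N l' X.
  by move=> X; have := E X; rewrite /bval; lia.
have hsz : size l = size l'.
  case: (ltngtP (size l) (size l')) => // hlt.
    by have := part_pos hl' hlt; rewrite -En nth_default.
  by have := part_pos hl hlt; rewrite En nth_default.
by apply: (eq_from_nth (x0 := 0%N)) => // i _; exact: En.
Qed.

Lemma beta_lo l s m : m < s - (size l)%:Z -> beta_set l s m.
Proof.
move=> hm; apply/betaE; exists `|(s - m - 1)%R|%N.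
rewrite /bval nth_default; last by lia.
lia.
Qed.

Lemma beta_hi l s m : s + (sumn l)%:Z <= m -> ~ beta_set l s m.
Proof.
move=> hm /betaE [X hX]; have := nth_le_sumn l X; rewrite /bval in hX; lia.
Qed.

Lemma beta_nil s m : beta_set [::] s m <-> m < s.
Proof.
split; first by case/betaE => X ->; rewrite /bval nth_nil; lia.
by move=> hm; apply: beta_lo; rewrite /= subr0.
Qed.

Lemma beta_cons a l s m : (0 < a)%N -> 
  beta_set (a :: l) (s + 1) m <-> (m = a%:Z + s \/ beta_set l s m).
Proof.
move=> ha; rewrite betaE betaE; split.
  case=> [[|X] ->]; rewrite /bval /=; first by left; lia.
  by right; exists X; rewrite /bval; lia.
case=> [->|[X ->]]; first by exists 0%N; rewrite /bval /=; lia.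
by exists X.+1; rewrite /bval /=; lia.
Qed.

Lemma beta_exists_aux (n : nat) : forall (P : int -> Prop) (L U : int),
  U - L <= n%:Z ->
  (forall m, m < L -> P m) -> (forall m, U <= m -> ~ P m) ->
  exists l s, is_partition l /\ forall m, P m <-> beta_set l s m.
Proof.
elim: n => [|n IH] P L U hn hL hU.
  exists [::], L; split => // m; rewrite beta_nil; split; last exact: hL.
  by move=> hP; case: (ltP m L) => // h; case: (hU m) => //; lia.
case: (ltP L U) => hLU; last first.
  exists [::], L; split => // m; rewrite beta_nil; split; last exact: hL.
  by move=> hP; case: (ltP m L) => // h; case: (hU m) => //; lia.
case: (classic (P (U - 1))) => hP; last first.
  apply: (IH P L (U - 1)) => //; first lia.
  move=> m hm; case: (ltP (U - 1) m) => h; first by apply: hU; lia.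
  by have -> : m = U - 1 by lia.
pose Q m := P m /\ m <> U - 1.
have [l [s [hl hQ]]] : exists l s, is_partition l /\ forall m, Q m <-> beta_set l s m.
  apply: (IH Q L (U - 1)); first lia.
    by move=> m hm; split; [exact: hL | lia].
  move=> m hm [hPm hne]; by apply: (hU m) => //; lia.
have hPQ : forall m, P m <-> Q m \/ m = U - 1.
  move=> m; split; last by case=> [[]|->].
  by move=> hm; case: (classic (m = U - 1)) => h; [right | left].
have hb0 : bval l s 0%N < U - 1.
  have : Q (bval l s 0%N) by apply/hQ/betaE; exists 0%N.
  case=> hp hne; case: (ltP (bval l s 0%N) (U - 1)) => // h.
  by case: (hU (bval l s 0%N)) => //; lia.
rewrite /bval /= in hb0.
case: (ltP 0 (U - 1 - s)) => ha.
  exists (`|(U - 1 - s)%R|%N :: l), (s + 1); split.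
    rewrite /is_partition /=; case/andP: hl => h1 h2.
    rewrite h2 andbT; clear h2; apply/andP; split; last lia.
    case: l h1 hb0 {hQ hPQ} => //= b l1 h1 hb; rewrite h1 andbT; lia.
  move=> m; rewrite beta_cons; last lia.
  rewrite hPQ hQ; split; case=> h; try by [left|right]; lia.
have hl0 : l = [::].
  case: l hl hb0 {hQ} => // b l' hl' hb.
  by have := @part_pos _ 0%N hl' (ltn0Sn _); rewrite /= in hb *; lia.
subst l.
exists [::], (s + 1); split => // m; rewrite beta_nil hPQ hQ beta_nil.
split; first by case; lia.
by move=> h; case: (ltP m s) => h2; [left | right]; lia.
Qed.

Lemma beta_exists (P : int -> Prop) (L U : int) :
  (forall m, m < L -> P m) -> (forall m, U <= m -> ~ P m) ->
  exists l s, is_partition l /\ forall m, P m <-> beta_set l s m.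
Proof. move=> hL hU; apply: (@beta_exists_aux `|(U - L)%R|%N P L U) => //; lia. Qed.

End S2.
Section S3.
Local Open Scope ring_scope.
Variable e : nat.
Hypothesis he : (0 < e)%N.
Variable M : 'I_e -> nat.

Definition mM (m : int) : nat := (\sum_(i < e) (((m %% e%:Z)%Z == i%:Z) * M i))%N.
Definition psi (m : int) : int := m - (e * mM m)%N%:Z.
Definition phi (m : int) : int := m + (e * mM m)%N%:Z.

Lemma mod_ord (m : int) : exists i : 'I_e, (m %% e%:Z)%Z = (nat_of_ord i)%:Z.
Proof.
have h0 := modz_ge0 m (ez he); have h1 := ltz_pmod m (ezp he).
have hi : (`|(m %% e%:Z)%Z|%N < e)%N by lia.
by exists (Ordinal hi) => /=; lia.
Qed.

Lemma sel_nat (m : int) (i : 'I_e) (G : 'I_e -> nat) : (m %% e%:Z)%Z = i%:Z ->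
  (\sum_(i' < e) (((m %% e%:Z)%Z == i'%:Z) * G i'))%N = G i.
Proof.
move=> hm; rewrite (bigD1 i) //= hm eqxx mul1n big1 ?addn0 // => j hj.
have -> : (i%:Z == j%:Z) = false; last by rewrite mul0n.
by apply/negbTE; rewrite eqz_nat eq_sym; exact: hj.
Qed.

Lemma sel_int (m : int) (i : 'I_e) (G : 'I_e -> int) : (m %% e%:Z)%Z = i%:Z ->
  \sum_(i' < e) (((m %% e%:Z)%Z == i'%:Z)%:R * G i') = G i.
Proof.
move=> hm; rewrite (bigD1 i) //= hm eqxx mul1r big1 ?addr0 // => j hj.
have -> : (i%:Z == j%:Z) = false; last by rewrite mul0r.
by apply/negbTE; rewrite eqz_nat eq_sym; exact: hj.
Qed.

Lemma mM_sel (m : int) (i : 'I_e) : (m %% e%:Z)%Z = i%:Z -> mM m = M i.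
Proof. exact: sel_nat. Qed.

Lemma mod_shift (m k : int) : ((m + k * e%:Z) %% e%:Z)%Z = (m %% e%:Z)%Z.
Proof. by rewrite addrC modzMDl. Qed.

Lemma mM_shift (m k : int) : mM (m + k * e%:Z) = mM m.
Proof. by rewrite /mM; apply: eq_bigr => i _; rewrite mod_shift. Qed.

Lemma psiK m : psi (phi m) = m.
Proof.
rewrite /psi /phi.
have -> : m + (e * mM m)%N%:Z = m + (mM m)%:Z * e%:Z by rewrite PoszM mulrC.
rewrite mM_shift; lia.
Qed.

Lemma phiK m : phi (psi m) = m.
Proof.
rewrite /psi /phi.
have -> : m - (e * mM m)%N%:Z = m + (- (mM m)%:Z) * e%:Z by rewrite PoszM mulrC mulNr.
rewrite mM_shift; lia.
Qed.

Lemma mM_le m : (mM m <= \sum_(i < e) M i)%N.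
Proof.
have [i hi] := mod_ord m; rewrite (mM_sel hi) (bigD1 i) //=; exact: leq_addr.
Qed.

Lemma runner_iff (B : int -> Prop) (i : nat) c : (i < e)%N ->
  runner_set e B i c <-> B (c * e%:Z + i%:Z).
Proof.
move=> hi; split.
  case=> b [hb [hbi ->]].
  have hd := divz_eq b e%:Z.
  suff -> : ((b - i%:Z) %/ e%:Z)%Z * e%:Z + i%:Z = b by [].
  have -> : b - i%:Z = (b %/ e%:Z)%Z * e%:Z by rewrite {1}hd hbi; lia.
  by rewrite mulzK ?(ez he) // [RHS]hd hbi.
move=> hB; exists (c * e%:Z + i%:Z); split => //; split.
  by rewrite modzMDl modz_small //; apply/andP; split; lia.
by rewrite addrK mulzK // (ez he).
Qed.

Lemma beta_shift l t k c : beta_set l t (c - k) <-> beta_set l (t + k) c.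
Proof.
split; case=> X [hX h]; exists X; split => //; lia.
Qed.

Lemma runner_bounds (B : int -> Prop) (K K' : int) (i : nat) : (i < e)%N ->
  (forall m, m < K -> B m) -> (forall m, K' <= m -> ~ B m) ->
  (forall c, c < - `|K|%:Z - 1 -> runner_set e B i c) /\
  (forall c, `|K'|%:Z <= c -> ~ runner_set e B i c).
Proof.
move=> hi hK hK'; split => c hc.
  apply/runner_iff => //; apply: hK.
  have : (c + 1) * (e%:Z - 1) <= 0.
    apply: mulr_le0_ge0; lia.
  lia.
move/runner_iff => /(_ hi); apply: hK'.
have : 0 <= c * (e%:Z - 1) by apply: mulr_ge0; lia.
lia.
Qed.

Lemma decomp_spec (C : int -> Prop) L U :
  (forall m, m < L -> C m) -> (forall m, U <= m -> ~ C m) ->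
  is_partition (beta_decomp C).1 /\
  forall c, C c <-> beta_set (beta_decomp C).1 (beta_decomp C).2 c.
Proof.
move=> hL hU; have [l [s [hl h]]] := beta_exists hL hU.
apply: (@epsilon_spec _ (inhabits ([::], 0%R)) (fun p : config =>
  is_partition p.1 /\ forall c, C c <-> beta_set p.1 p.2 c)).
by exists (l, s).
Qed.

Lemma eta_spec (B : int -> Prop) K K' (i : 'I_e) :
  (forall m, m < K -> B m) -> (forall m, K' <= m -> ~ B m) ->
  is_partition (beta_decomp (runner_set e B i)).1 /\
  forall c, runner_set e B i c <->
    beta_set (beta_decomp (runner_set e B i)).1 (beta_decomp (runner_set e B i)).2 c.
Proof.
move=> hK hK'; have [h1 h2] := runner_bounds (ltn_ord i) hK hK'.
exact: (@decomp_spec (runner_set e B i) _ _ h1 h2).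
Qed.

Lemma eta_spec_cfg (x : config) (i : 'I_e) : is_partition x.1 ->
  is_partition (eta x i).1 /\
  forall c, runner_set e (beta_set x.1 x.2) i c <-> beta_set (eta x i).1 (eta x i).2 c.
Proof.
move=> hx; apply: (@eta_spec _ (x.2 - (size x.1)%:Z) (x.2 + (sumn x.1)%:Z)).
  by move=> m; apply: beta_lo.
by move=> m; apply: beta_hi.
Qed.

Lemma sumM_ge m : (e * mM m <= e * \sum_(i < e) M i)%N.
Proof. by rewrite leq_mul2l mM_le orbT. Qed.

Lemma Str_spec (x : config) : is_partition x.1 ->
  is_partition (Str M x).1 /\
  forall m, beta_set (Str M x).1 (Str M x).2 m <-> beta_set x.1 x.2 (psi m).
Proof.
move=> hx.
set SM := (e * \sum_(i < e) M i)%N.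
have [l' [s' [hl' hP]]] : exists l' s', is_partition l' /\
    forall m, beta_set x.1 x.2 (psi m) <-> beta_set l' s' m.
  apply: (@beta_exists _ (x.2 - (size x.1)%:Z) (x.2 + (sumn x.1)%:Z + SM%:Z)).
    move=> m hm; apply: beta_lo; rewrite /psi; lia.
  move=> m hm; apply: beta_hi; rewrite /psi.
  have := sumM_ge m; rewrite -/SM; lia.
have key : forall y : config, is_partition y.1 ->
    (forall i : 'I_e, eta y i = ((eta x i).1, (eta x i).2 + (M i)%:Z)) ->
    forall m, beta_set y.1 y.2 m <-> beta_set x.1 x.2 (psi m).
  move=> y hy hyi m.
  have [i hi] := mod_ord m.
  set c := (m %/ e%:Z)%Z.
  have hm : m = c * e%:Z + i%:Z by rewrite {1}(divz_eq m e%:Z) hi.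
  have hpsi : psi m = (c - (M i)%:Z) * e%:Z + i%:Z.
    by rewrite /psi (mM_sel hi) hm PoszM; lia.
  rewrite hpsi {1}hm -!runner_iff //.
  have [_ ->] := eta_spec_cfg i hy.
  have [_ ->] := eta_spec_cfg i hx.
  by rewrite hyi /= beta_shift.
have ex : exists y : config, is_partition y.1 /\
    forall i : 'I_e, eta y i = ((eta x i).1, (eta x i).2 + (M i)%:Z).
  exists (l', s'); split => // i.
  have [hp1 hp2] := eta_spec_cfg i (x := (l', s')) hl'.
  have [hq1 hq2] := eta_spec_cfg i hx.
  have [E1 E2] : (eta (l', s') i).1 = (eta x i).1 /\
                 (eta (l', s') i).2 = (eta x i).2 + (M i)%:Z.
    apply: beta_uniq => // c; rewrite -hp2 -beta_shift -hq2 /=.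
    rewrite !runner_iff //; rewrite -hP.
    suff -> : (c - (M i)%:Z) * e%:Z + i%:Z = psi (c * e%:Z + i%:Z) by [].
    have hi : ((c * e%:Z + i%:Z) %% e%:Z)%Z = i%:Z.
      move: (ltn_ord i) => hie; rewrite modzMDl modz_small //; apply/andP; split; lia.
    by rewrite /psi (mM_sel hi) PoszM; lia.
  by rewrite -E1 -E2; case: (eta (l', s') i).
have := epsilon_spec (inhabits ([::], 0)) _ ex.
rewrite -/(Str M x) => -[h1 h2]; split => //; exact: key.
Qed.

End S3.
Section S4.
Local Open Scope ring_scope.

Definition W (L : int) (n : nat) (h : int -> int) : int :=
  \sum_(0 <= k < n) h (L + k%:Z).

Lemma big0_nat_int (a b : nat) (f : nat -> int) :
  (forall k, (a <= k < b)%N -> f k = 0) -> \sum_(a <= k < b) f k = 0.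
Proof. by move=> h; rewrite big_nat_cond big1 // => k /andP[hk _]; apply: h. Qed.

Lemma W_ext (h : int -> int) L n a p :
  (forall m, m < a \/ a + p%:Z <= m -> h m = 0) ->
  L <= a -> a + p%:Z <= L + n%:Z -> W L n h = W a p h.
Proof.
move=> hh hLa hap.
set d := `|(a - L)%R|%N.
have hd : a = L + d%:Z by rewrite /d; lia.
rewrite /W (@big_cat_nat _ _ _ d) //=; last by lia.
rewrite (@big_cat_nat _ _ _ (d + p)%N _ n); [|lia|lia].
rewrite big0_nat_int; last by move=> k hk; apply: hh; left; lia.
rewrite (big0_nat_int (a := (d + p)%N)); last by move=> k hk; apply: hh; right; lia.
rewrite /= add0r addr0 -{1}(add0n d) big_addn.
have -> : (d + p - d = p)%N by lia.
by apply: eq_bigr => k _; congr h; lia.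
Qed.

Lemma W_shift (u : int -> int) L n (Q : nat) : (Q <= n)%N ->
  (forall m, m < L + Q%:Z \/ L + n%:Z <= m -> u m = 0) ->
  \sum_(0 <= k < n) u (L + k%:Z + Q%:Z) = W L n u.
Proof.
move=> hQ hu.
have -> : \sum_(0 <= k < n) u (L + k%:Z + Q%:Z) = W (L + Q%:Z) n u.
  by apply: eq_bigr => k _; congr u; lia.
have hv : forall m, m < L + Q%:Z \/ L + Q%:Z + (n - Q)%N%:Z <= m -> u m = 0.
  by move=> m hm; apply: hu; lia.
rewrite (@W_ext u (L + Q%:Z) n (L + Q%:Z) (n - Q) hv); [|lia|lia].
by rewrite (@W_ext u L n (L + Q%:Z) (n - Q) hv); [|lia|lia].
Qed.

Variable e : nat.
Hypothesis he : (0 < e)%N.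
Variable M : 'I_e -> nat.

Definition SM : nat := (e * \sum_(i < e) M i)%N.

Lemma phi_sel (m : int) (h : int -> int) :
  h (phi M m) = \sum_(i < e) (((m %% e%:Z)%Z == i%:Z)%:R * h (m + (e * M i)%N%:Z)).
Proof.
have [i hi] := mod_ord he m.
by rewrite (sel_int (fun i => h (m + (e * M i)%N%:Z)) hi) /phi (mM_sel M hi).
Qed.

Lemma W_phi (h : int -> int) L n : (SM <= n)%N ->
  (forall m, m < L + SM%:Z \/ L + n%:Z <= m -> h m = 0) ->
  W L n (fun m => h (phi M m)) = W L n h.
Proof.
move=> hn hh; rewrite /W.
under eq_bigr => k _ do rewrite phi_sel.
rewrite exchange_big /=.
transitivity (\sum_(i < e) \sum_(0 <= k < n)
   (fun m => (((m %% e%:Z)%Z == i%:Z)%:R * h m)) (L + k%:Z)).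
  apply: eq_bigr => i _.
  have hQ : (e * M i <= SM)%N by rewrite /SM leq_mul2l (bigD1 i) //= leq_addr orbT.
  have := @W_shift (fun m => (((m %% e%:Z)%Z == i%:Z)%:R * h m)) L n (e * M i).
  rewrite /W => <- //; last first.
  - by move=> m hm /=; rewrite hh ?mulr0 //; lia.
  - lia.
  apply: eq_bigr => k _ /=.
  have -> : L + k%:Z + (e * M i)%N%:Z = (L + k%:Z) + (M i)%:Z * e%:Z by rewrite PoszM mulrC.
  by rewrite mod_shift.
rewrite exchange_big /=; apply: eq_bigr => k _.
have [i hi] := mod_ord he (L + k%:Z).
by rewrite (sel_int (fun _ => h (L + k%:Z)) hi).
Qed.

Lemma W_psi (h : int -> int) L n : (SM <= n)%N ->
  (forall m, m < L + SM%:Z \/ L + n%:Z <= m -> h (psi M m) = 0) ->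
  W L n (fun m => h (psi M m)) = W L n h.
Proof.
move=> hn hh.
rewrite -(W_phi hn hh) /W; apply: eq_bigr => k _; by rewrite (psiK he).
Qed.

End S4.
Section S5.
Local Open Scope ring_scope.

Definition pb (P : Prop) : bool := if excluded_middle_informative P then true else false.
Lemma pbP P : reflect P (pb P).
Proof. by rewrite /pb; case: excluded_middle_informative => h; constructor. Qed.
Definition ind (P : Prop) : int := if pb P then 1 else 0.

Lemma ind_iff (P Q : Prop) : (P <-> Q) -> ind P = ind Q.
Proof. by move=> h; rewrite /ind; case: pbP => hp; case: pbP => hq //; tauto. Qed.

Lemma enumW l s (N n : nat) (g : int -> int) : is_partition l ->
  (size l <= N)%N -> (N + sumn l <= n)%N ->
  W (s - N%:Z) n (fun m => ind (beta_set l s m) * g m) = \sum_(0 <= X < N) g (bval l s X).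
Proof.
move=> hl hN hn; rewrite /W.
rewrite -(big_map (fun k : nat => s - N%:Z + k%:Z) xpredT (fun m => ind (beta_set l s m) * g m)).
transitivity (\sum_(m <- [seq m <- [seq s - N%:Z + k%:Z | k : nat <- index_iota 0 n] | pb (beta_set l s m)]) g m).
  rewrite big_filter [RHS]big_mkcond; apply: eq_big => // m _; rewrite /ind.
  by case: pbP => _; rewrite ?mul1r ?mul0r.
rewrite -(big_map (bval l s) xpredT g).
apply: perm_big; apply: uniq_perm.
- apply: filter_uniq; rewrite map_inj_uniq ?iota_uniq //.
  by move=> a b /= h; apply/eqP; rewrite -eqz_nat; apply/eqP; lia.
- by rewrite map_inj_uniq ?iota_uniq //; apply: decr_inj; exact: bval_decr.
move=> m; rewrite mem_filter; apply/andP/mapP.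
  case=> /pbP /betaE [X ->] /mapP [k]; rewrite mem_index_iota => /andP [_ hk] hX.
  exists X => //; rewrite mem_index_iota /=.
  case: (ltnP X N) => // hXN.
  move: hX; rewrite /bval nth_default; first lia.
  exact: leq_trans hN hXN.
case=> X; rewrite mem_index_iota => /andP [_ hX] ->; split.
  by apply/pbP/betaE; exists X.
apply/mapP; exists `|(bval l s X - (s - N%:Z))%R|%N.
  rewrite mem_index_iota /=.
  have := nth_le_sumn l X; rewrite /bval; lia.
have := nth_le_sumn l X; rewrite /bval; lia.
Qed.


Definition Dl (l : seq nat) (s : int) (g : int -> int) : int :=
  \sum_(0 <= X < size l) (g (bval l s X) - g (s - X%:Z - 1)).

Lemma Dl_lin l s g1 g2 : Dl l s g1 - Dl l s g2 = Dl l s (fun m => g1 m - g2 m).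
Proof. rewrite /Dl -sumrB; apply: eq_bigr => X _; lia. Qed.

Lemma Dl_const l s c : Dl l s (fun _ => c) = 0.
Proof. by rewrite /Dl big1 // => X _; rewrite subrr. Qed.

Lemma Dl_ext l s g1 g2 : (forall m, g1 m = g2 m) -> Dl l s g1 = Dl l s g2.
Proof. by move=> h; apply: eq_bigr => X _; rewrite !h. Qed.

Lemma WF l s L n g : is_partition l -> L <= s - (size l)%:Z ->
  s + (sumn l)%:Z <= L + n%:Z ->
  W L n (fun m => (ind (beta_set l s m) - ind (beta_set [::] s m)) * g m) = Dl l s g.
Proof.
move=> hl hL hn.
set N := `|(s - L)%R|%N.
have hNe : N%:Z = s - L by rewrite /N; lia.
have -> : L = s - N%:Z by lia.
transitivity (W (s - N%:Z) n (fun m => ind (beta_set l s m) * g m) -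
              W (s - N%:Z) n (fun m => ind (beta_set [::] s m) * g m)).
  by rewrite /W -sumrB; apply: eq_bigr => k _; rewrite mulrBl.
rewrite enumW //; [|lia|lia].
rewrite enumW //=; [|lia].
rewrite -sumrB (@big_cat_nat _ _ _ (size l)) //=; last by lia.
rewrite [X in _ + X]big1_seq ?addr0; last first.
  move=> X; rewrite mem_index_iota /= => /andP [hX _].
  rewrite /bval nth_default // nth_nil [Y in g Y - _](_ : _ = s - X%:Z - 1); last by lia.
  by rewrite [Y in _ - g Y](_ : _ = s - X%:Z - 1) ?subrr //; lia.
by apply: eq_bigr => X _; rewrite /bval nth_nil; congr (_ - g _); lia.
Qed.

Definition rc1 (e : nat) (l : seq nat) (s : int) (j : nat) : nat :=
  (\sum_(x < size l) \sum_(y < nth 0%N l x)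
     (((s + y.+1%:Z - x.+1%:Z) %% e%:Z)%Z == j%:Z))%N.

Lemma RC e l s j : (0 < e)%N -> (j < e)%N -> (rc1 e l s j)%:Z = Dl l s (F e j).
Proof.
move=> he hj; rewrite /rc1 /Dl big_mkord.
rewrite (big_morph Posz (id1 := 0) (op1 := +%R) PoszD (erefl _)).
apply: eq_bigr => x _.
have -> : (\sum_(y < nth 0%N l x) (((s + y.+1%:Z - x.+1%:Z) %% e%:Z)%Z == j%:Z))%N =
   (\sum_(y < nth 0%N l x) ((((s - x.+1%:Z) + y.+1%:Z) %% e%:Z)%Z == j%:Z))%N.
  by apply: eq_bigr => y _; congr (nat_of_bool (_ == _)); congr (_ %% _)%Z; lia.
rewrite cnt //; rewrite /bval; congr (F e j _ - F e j _); lia.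
Qed.

Lemma supp_Delta l s m : m < s - (size l)%:Z \/ s + (sumn l)%:Z <= m ->
  ind (beta_set l s m) - ind (beta_set [::] s m) = 0.
Proof.
case=> hm.
  rewrite (ind_iff (Q := True)); last by split => // _; apply: beta_lo.
  rewrite (ind_iff (P := beta_set [::] s m) (Q := True)) ?subrr //.
  by split => // _; apply/beta_nil; lia.
rewrite (ind_iff (Q := False)); last by split => // /beta_hi; apply.
rewrite (ind_iff (P := beta_set [::] s m) (Q := False)) ?subrr //.
by split => // /beta_nil; lia.
Qed.

Lemma F_diff e i m : (0 < e)%N -> (i < e)%N ->
  F e i m - F e i.+1 m = ((m %% e%:Z)%Z == i%:Z)%:R.
Proof.
move=> he hi.
have -> : F e i.+1 m = F e i (m - 1) by rewrite /F; congr (_ %/ _)%Z; lia.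
have := F_step he (m - 1) hi; rewrite subrK => ->; by case: (_ == _).
Qed.

Lemma F_e e m : (0 < e)%N -> F e e m = F e 0 m - 1.
Proof.
move=> he; rewrite /F.
have -> : m - e%:Z = (-1) * e%:Z + (m - 0%:Z) by lia.
by rewrite divzMDl ?(ez he) // addrC.
Qed.

Lemma F_shift e j m (k : nat) : (0 < e)%N -> F e j (m + (e * k)%N%:Z) = F e j m + k%:Z.
Proof.
move=> he; rewrite /F.
have -> : m + (e * k)%N%:Z - j%:Z = k%:Z * e%:Z + (m - j%:Z) by rewrite PoszM; lia.
by rewrite divzMDl ?(ez he) // addrC.
Qed.

End S5.
Section S6.
Local Open Scope ring_scope.
Variable e : nat.
Hypothesis he : (0 < e)%N.
Variable M : 'I_e -> nat.

Definition SigM : nat := (\sum_(i < e) M i)%N.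

Lemma SM_E : SM M = (e * SigM)%N. Proof. by []. Qed.

Lemma ind_T (P : Prop) : P -> ind P = 1.
Proof. by move=> h; rewrite /ind; case: pbP. Qed.
Lemma ind_F (P : Prop) : ~ P -> ind P = 0.
Proof. by move=> h; rewrite /ind; case: pbP. Qed.

Lemma psi_le m : psi M m <= m /\ m - (SM M)%:Z <= psi M m.
Proof.
have [i hi] := mod_ord he m.
have : (e * M i <= SM M)%N by rewrite SM_E leq_mul2l /SigM (bigD1 i) //= leq_addr orbT.
rewrite /psi (mM_sel M hi); lia.
Qed.

Lemma W_nil t L n : L <= t -> t <= L + n%:Z ->
  W L n (fun m => ind (beta_set [::] t m)) = t - L.
Proof.
move=> h1 h2; set N := `|(t - L)%R|%N.
have hN : N%:Z = t - L by rewrite /N; lia.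
have -> : L = t - N%:Z by lia.
transitivity (W (t - N%:Z) n (fun m => ind (beta_set [::] t m) * 1)).
  by apply: eq_bigr => k _; rewrite mulr1.
have := @enumW [::] t N n (fun _ => 1) is_true_true (leq0n _).
rewrite addn0 => ->; last lia.
rewrite big_const_nat subn0.
suff -> : iter N (+%R 1) (0 : int) = N%:Z by lia.
by elim: N {hN} => //= N IH; rewrite IH; lia.
Qed.

Lemma CL s L n : L + (SM M)%:Z <= s -> s + (SM M)%:Z <= L + n%:Z ->
  W L n (fun m => ind (psi M m < s) - ind (m < s)) = SigM%:Z.
Proof.
move=> h1 h2.
have pw : forall m, ind (psi M m < s) - ind (m < s) =
   \sum_(i < e) (((m %% e%:Z)%Z == i%:Z)%:R * ind (s <= m /\ m < s + (e * M i)%N%:Z)).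
  move=> m; have [i hi] := mod_ord he m.
  rewrite (sel_int (fun i => ind (s <= m /\ m < s + (e * M i)%N%:Z)) hi).
  rewrite /psi (mM_sel M hi) /ind.
  case: pbP => ha; case: pbP => hb; case: pbP => hc //; exfalso; lia.
rewrite /W; under eq_bigr do rewrite pw.
rewrite exchange_big /= /SigM.
rewrite (big_morph Posz (id1 := 0) (op1 := +%R) PoszD (erefl _)).
apply: eq_bigr => i _.
have hMi : (e * M i <= SM M)%N by rewrite SM_E leq_mul2l /SigM (bigD1 i) //= leq_addr orbT.
have := @W_ext (fun m => ((m %% e%:Z)%Z == i%:Z)%:R * ind (s <= m /\ m < s + (e * M i)%N%:Z))
   L n s (e * M i).
rewrite /W => ->; last first.
- lia.
- lia.
- by move=> m hm; rewrite ind_F ?mulr0 //; lia.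
transitivity (\sum_(0 <= k < e * M i) (((s + k%:Z) %% e%:Z)%Z == i%:Z)%:R :> int).
  by apply: eq_big_nat => k /andP [_ hk]; rewrite ind_T ?mulr1 //; split; lia.
rewrite big_mkord.
have := cnt he (s - 1) (e * M i) (ltn_ord i).
rewrite (big_morph Posz (id1 := 0) (op1 := +%R) PoszD (erefl _)).
have -> : \sum_(k < e * M i) (((s - 1 + k.+1%:Z) %% e%:Z)%Z == i%:Z : nat)%:Z =
          \sum_(k < e * M i) (((s + k%:Z) %% e%:Z)%Z == i%:Z)%:R :> int.
  apply: eq_bigr => k _; have -> : s - 1 + k.+1%:Z = s + k%:Z by lia.
  by case: (_ == _).
move=> ->; by rewrite F_shift // addrC addKr.
Qed.

Definition Delta (l : seq nat) (s : int) (m : int) : int :=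
  ind (beta_set l s m) - ind (beta_set [::] s m).

Definition Ef (s : int) (m : int) : int :=
  ind (beta_set [::] s (psi M m)) - ind (beta_set [::] (s + SigM%:Z) m).

Section Win.
Variables (l : seq nat) (s : int) (L : int) (n : nat).
Hypothesis hl : is_partition l.
Let y := Str M (l, s).
Hypothesis C1 : L + (SM M)%:Z <= s - (size l)%:Z.
Hypothesis C2 : L <= y.2 - (size y.1)%:Z.
Hypothesis C3 : s + (sumn l)%:Z + (SM M)%:Z <= L + n%:Z.
Hypothesis C4 : y.2 + (sumn y.1)%:Z <= L + n%:Z.

Lemma hy : is_partition y.1.
Proof. by have [] := Str_spec he M (x := (l, s)) hl. Qed.

Lemma hyB m : ind (beta_set y.1 y.2 m) = ind (beta_set l s (psi M m)).
Proof. apply: ind_iff; by have [_ ->] := Str_spec he M (x := (l, s)) hl. Qed.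

Lemma hSMn : (SM M <= n)%N.
Proof. have : 0 <= (size l)%:Z by []. lia. Qed.

Lemma W_Dpsi (g : int -> int) :
  W L n (fun m => Delta l s (psi M m) * g m) = W L n (fun m => Delta l s m * g (phi M m)).
Proof.
rewrite -(@W_psi e he M (fun m => Delta l s m * g (phi M m)) L n hSMn).
  by apply: eq_bigr => k _; rewrite phiK.
move=> m hm; rewrite /Delta supp_Delta ?mul0r //.
have := psi_le m; lia.
Qed.

Lemma charge : y.2 = s + SigM%:Z.
Proof.
have h0 : W L n (fun m => Delta y.1 y.2 m * 1) = 0.
  by rewrite /Delta WF ?hy // Dl_const.
have h1 : W L n (fun m => Delta l s m * 1) = 0.
  rewrite /Delta WF //; [by rewrite Dl_const | lia | lia].
have h2 := W_Dpsi (fun _ => 1); rewrite h1 in h2.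
have h3 := CL (s := s) (L := L) (n := n) ltac:(lia) ltac:(lia).
have h4 := @W_nil s L n ltac:(lia) ltac:(lia).
have h5 := @W_nil y.2 L n ltac:(lia) ltac:(lia).
have : W L n (fun m => Delta y.1 y.2 m * 1) =
  W L n (fun m => Delta l s (psi M m) * 1) +
  W L n (fun m => ind (psi M m < s) - ind (m < s)) +
  W L n (fun m => ind (beta_set [::] s m)) - W L n (fun m => ind (beta_set [::] y.2 m)).
  rewrite /W -!big_split /= -sumrB; apply: eq_bigr => k _.
  rewrite /Delta !mulr1 hyB.
  rewrite (@ind_iff (beta_set [::] s (psi M (L + k%:Z))) (psi M (L + k%:Z) < s)); last exact: beta_nil.
  rewrite (@ind_iff (beta_set [::] s (L + k%:Z)) (L + k%:Z < s)); last exact: beta_nil.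
  ring.
rewrite h0 h2 h3 h4 h5; lia.
Qed.

Lemma key (j : nat) : (j < e)%N ->
  (rc1 e y.1 y.2 j)%:Z = (rc1 e l s j)%:Z +
     \sum_(i < e) (M i)%:Z * Dl l s (fun m => ((m %% e%:Z)%Z == i%:Z)%:R) +
     W L n (fun m => Ef s m * F e j m).
Proof.
move=> hj.
rewrite !RC // -(@WF y.1 y.2 L n (F e j) hy) // -(@WF l s L n (F e j) hl); [|lia|lia].
have hsplit : W L n (fun m => (ind (beta_set y.1 y.2 m) - ind (beta_set [::] y.2 m)) * F e j m)
   = W L n (fun m => Delta l s (psi M m) * F e j m) + W L n (fun m => Ef s m * F e j m).
  rewrite /W -big_split /=; apply: eq_bigr => k _.
  by rewrite hyB /Ef charge /Delta; lia.
rewrite hsplit W_Dpsi; congr (_ + _).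
have pw : forall m, Delta l s m * F e j (phi M m) = Delta l s m * F e j m +
   \sum_(i < e) (M i)%:Z * (Delta l s m * ((m %% e%:Z)%Z == i%:Z)%:R).
  move=> m; have [i hi] := mod_ord he m.
  rewrite /phi (mM_sel M hi) F_shift // mulrDr; congr (_ + _).
  have := sel_int (fun i => (M i)%:Z * Delta l s m) hi.
  move=> h; rewrite mulrC -h; apply: eq_bigr => i' _; lia.
rewrite /W; under eq_bigr do rewrite pw.
rewrite big_split /=; congr (_ + _).
rewrite exchange_big /=; apply: eq_bigr => i _.
rewrite -mulr_sumr; congr (_ * _).
rewrite -(@WF l s L n _ hl); [|lia|lia].
done.
Qed.

End Win.
End S6.
Section S7.
Local Open Scope ring_scope.
Variable e : nat.
Hypothesis he : (0 < e)%N.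
Variable M : 'I_e -> nat.

Lemma window2 l1 l2 s : exists L n,
  let y1 := Str M (l1, s) in let y2 := Str M (l2, s) in
  (L + (SM M)%:Z <= s - (size l1)%:Z /\ L <= y1.2 - (size y1.1)%:Z /\
      s + (sumn l1)%:Z + (SM M)%:Z <= L + n%:Z /\ y1.2 + (sumn y1.1)%:Z <= L + n%:Z /\
   L + (SM M)%:Z <= s - (size l2)%:Z /\ L <= y2.2 - (size y2.1)%:Z /\
      s + (sumn l2)%:Z + (SM M)%:Z <= L + n%:Z /\ y2.2 + (sumn y2.1)%:Z <= L + n%:Z).
Proof.
set y1 := Str M (l1, s); set y2 := Str M (l2, s).
set A := (`|(s - y1.2)%R| + `|(s - y2.2)%R| + size l1 + size l2 + size y1.1 + size y2.1 + SM M)%N.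
exists (s - A%:Z), (2 * A + sumn l1 + sumn l2 + sumn y1.1 + sumn y2.1 + SM M)%N.
rewrite /= /A; lia.
Qed.

Lemma charge1 l s : is_partition l -> (Str M (l, s)).2 = s + (SigM M)%:Z.
Proof.
move=> hl; have [L [n [h1 [h2 [h3 [h4 _]]]]]] := window2 l l s.
exact: (charge he hl h1 h2 h3 h4).
Qed.

Lemma pair_key l1 l2 s j : is_partition l1 -> is_partition l2 -> (j < e)%N ->
  (rc1 e (Str M (l1, s)).1 (Str M (l1, s)).2 j)%:Z -
  (rc1 e (Str M (l2, s)).1 (Str M (l2, s)).2 j)%:Z =
  (rc1 e l1 s j)%:Z - (rc1 e l2 s j)%:Z +
  \sum_(i < e) (M i)%:Z * (Dl l1 s (fun m => ((m %% e%:Z)%Z == i%:Z)%:R) -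
                          Dl l2 s (fun m => ((m %% e%:Z)%Z == i%:Z)%:R)).
Proof.
move=> hl1 hl2 hj; have [L [n [h1 [h2 [h3 [h4 [h5 [h6 [h7 h8]]]]]]]]] := window2 l1 l2 s.
rewrite (key he hl1 h1 h2 h3 h4 hj) (key he hl2 h5 h6 h7 h8 hj).
under [X in _ = _ + X]eq_bigr do rewrite mulrBr.
rewrite sumrB; ring.
Qed.

Definition nx (i : nat) : nat := if i.+1 == e then 0%N else i.+1.
Lemma nx_lt i : (i < e)%N -> (nx i < e)%N.
Proof. by rewrite /nx; case: eqP => h hi //; lia. Qed.

Lemma Dl_res l s i : (i < e)%N ->
  Dl l s (fun m => ((m %% e%:Z)%Z == i%:Z)%:R) = (rc1 e l s i)%:Z - (rc1 e l s (nx i))%:Z.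
Proof.
move=> hi; rewrite !RC //; last exact: nx_lt.
rewrite Dl_lin /nx; case: eqP => h.
  transitivity (Dl l s (fun m => (F e i m - F e 0 m) + 1)).
    apply: Dl_ext => m; rewrite -F_diff //.
    have := F_e m he; rewrite -h => ->; ring.
  by rewrite /Dl; apply: eq_bigr => X _; ring.
by apply: Dl_ext => m; rewrite F_diff.
Qed.

End S7.
Section S8.
Local Open Scope ring_scope.
Variable e : nat.
Hypothesis he : (0 < e)%N.
Variable M : 'I_e -> nat.
Variable r : nat.

Definition Nz (X : mconfig r) (j : nat) : int :=
  \sum_(k < r) (rc1 e (X.1 k) (X.2 k) j)%:Z.

Lemma res_rc (X : mconfig r) (j : 'I_e) : (res_count X j)%:Z = Nz X j.
Proof.
by rewrite /res_count (big_morph Posz (id1 := 0) (op1 := +%R) PoszD (erefl _)).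
Qed.

Lemma sum_res_one (v : int) : (\sum_(j < e) (((v %% e%:Z)%Z == (nat_of_ord j)%:Z) : nat))%N = 1%N.
Proof.
have [i hi] := mod_ord he v.
have := sel_nat (fun _ => 1%N) hi.
by under eq_bigr do rewrite muln1.
Qed.

Lemma msize_sum (X : mconfig r) : msize X = (\sum_(j < e) res_count X j)%N.
Proof.
rewrite /msize /res_count exchange_big /=; apply: eq_bigr => k _.
rewrite exchange_big /=.
rewrite sumnE (big_nth 0%N) big_mkord; apply: eq_bigr => x _.
rewrite exchange_big /=.
under eq_bigr do rewrite sum_res_one.
by rewrite sum1_card card_ord.
Qed.

Lemma block_iff (X Y : mconfig r) :
  block_eq e X Y <-> X.2 = Y.2 /\ forall j : 'I_e, Nz X j = Nz Y j.
Proof.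
split.
  by case=> h1 [h2 h3]; split => // j; rewrite -!res_rc h3.
case=> h1 h3; split => //.
have h3' : forall j : 'I_e, res_count X j = res_count Y j.
  by move=> j; apply/eqP; rewrite -eqz_nat !res_rc h3.
split => //; rewrite !msize_sum; apply: eq_bigr => j _; exact: h3'.
Qed.

Lemma mStr2 (X : mconfig r) k : (mStr M X).2 k = (Str M (X.1 k, X.2 k)).2.
Proof. by rewrite /mStr /= ffunE. Qed.
Lemma mStr1 (X : mconfig r) k : (mStr M X).1 k = (Str M (X.1 k, X.2 k)).1.
Proof. by []. Qed.

Definition Dk (l : seq nat) (s : int) (i : 'I_e) : int :=
  Dl l s (fun m => ((m %% e%:Z)%Z == (nat_of_ord i)%:Z)%:R).

Lemma diffF (lam mu : 'I_r -> seq nat) (s : {ffun 'I_r -> int}) j :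
  (forall k, is_partition (lam k)) -> (forall k, is_partition (mu k)) -> (j < e)%N ->
  Nz (mStr M (lam, s)) j - Nz (mStr M (mu, s)) j =
  (Nz (lam, s) j - Nz (mu, s) j) +
  \sum_(i < e) (M i)%:Z * ((Nz (lam, s) i - Nz (mu, s) i) -
                            (Nz (lam, s) (nx e i) - Nz (mu, s) (nx e i))).
Proof.
move=> hl hm hj.
rewrite /Nz -sumrB.
under eq_bigr => k _ do rewrite !mStr1 !mStr2 /= (pair_key he M (s k) (hl k) (hm k) hj).
rewrite big_split /= -sumrB; congr (_ + _).
rewrite exchange_big /=; apply: eq_bigr => i _.
rewrite -mulr_sumr; congr (_ * _).
rewrite -!sumrB; apply: eq_bigr => k _; rewrite !Dl_res //; ring.
Qed.

End S8.
Section S9.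
Local Open Scope ring_scope.

Lemma main_aux (e : nat) (he : (2 <= e)%N) (r : nat) (hr : (1 <= r)%N)
  (M : 'I_e -> nat) (lam mu : 'I_r -> seq nat) (s s' : {ffun 'I_r -> int}) :
  (forall k, is_partition (lam k)) -> (forall k, is_partition (mu k)) ->
  (block_eq e (lam, s) (mu, s') <-> block_eq e (mStr M (lam, s)) (mStr M (mu, s'))).
Proof.
move=> hl hm.
have he1 : (0 < e)%N by apply: leq_trans he.
rewrite !(block_iff he1).
have hch : forall (nu : 'I_r -> seq nat) (t : {ffun 'I_r -> int}),
    (forall k, is_partition (nu k)) ->
    (mStr M (nu, t)).2 = [ffun k => t k + (SigM M)%:Z].
  move=> nu t hnu; apply/ffunP => k.
  by rewrite (mStr2 M (nu, t)) ffunE /= (charge1 he1 M (t k) (hnu k)).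
rewrite (hch _ _ hl) (hch _ _ hm) /=.
have heq : ([ffun k => s k + (SigM M)%:Z] = [ffun k => s' k + (SigM M)%:Z]) <-> s = s'.
  split; last by move=> ->.
  move=> h; apply/ffunP => k; move/ffunP: h => /(_ k); rewrite !ffunE.
  by move/addIr.
rewrite heq.
split; case=> hs hN; split => //; subst s'; move=> j.
- apply/eqP; rewrite -subr_eq0; apply/eqP.
  rewrite (diffF he1 M s hl hm (ltn_ord j)).
  have ha : forall i, (i < e)%N -> Nz e (lam, s) i - Nz e (mu, s) i = 0.
    by move=> i hi; rewrite (hN (Ordinal hi)) subrr.
  rewrite ha // big1 ?addr0 // => i _.
  by rewrite ha // ha ?subrr ?mulr0 //; apply: nx_lt.
- set a := fun i => Nz e (lam, s) i - Nz e (mu, s) i.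
  set c := \sum_(i < e) (M i)%:Z * (a i - a (nx e i)).
  have hd : forall i, (i < e)%N -> a i + c = 0.
    move=> i hi; rewrite /a /c -(diffF he1 M s hl hm hi).
    by rewrite (hN (Ordinal hi)) subrr.
  have hc : c = 0.
    rewrite /c big1 // => i _.
    have h1 := hd i (ltn_ord i); have h2 := hd (nx e i) (nx_lt he1 (ltn_ord i)).
    have -> : a i - a (nx e i) = 0 by lia.
    by rewrite mulr0.
  have := hd j (ltn_ord j); rewrite hc addr0 /a => h.
  by apply/eqP; rewrite -subr_eq0 h.
Qed.

End S9.

Theorem lemma3p7 (e : nat) (he : (2 <= e)%N) (r : nat) (hr : (1 <= r)%N)
  (M : 'I_e -> nat) (lam mu : 'I_r -> seq nat) (s s' : {ffun 'I_r -> int}) :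
  (forall k, is_partition (lam k)) -> (forall k, is_partition (mu k)) ->
  (block_eq e (lam, s) (mu, s') <->
   block_eq e (mStr M (lam, s)) (mStr M (mu, s'))).
Proof. exact: main_aux. Qed.
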